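(* Let $f \in \mathrm{Inj}(\Omega)$ satisfy $(f)\mathrm{C}_{\mathrm{open}} + (f)\mathrm{C}_{\mathrm{fwd}} = 1$ and $(f)\mathrm{C}_n < \aleph_0$ for all $n \in \mathbb{Z}_+$, and let $h \in \mathrm{Alt}(\Omega)$. Then $fh \approx_{\mathrm{even}} f \approx_{\mathrm{even}} hf$.
   Context: $\Omega$ is a countably infinite set; maps are written on the right and composed left to right. $\mathrm{Inj}(\Omega)$ is the monoid of injective maps $\Omega\to\Omega$; $\mathrm{Alt}(\Omega)$ the group of even permutations moving only finitely many points. For $f\in\mathrm{Inj}(\Omega)$, a cycle of $f$ is a nonempty $\Sigma\subseteq\Omega$ such that (a) for all $\alpha\in\Omega$, $(\alpha)f\in\Sigma$ iff $\alpha\in\Sigma$, and (b) no proper nonempty subset of $\Sigma$ satisfies (a). A forward cycle is an infinite cycle $\Sigma$ with $\Sigma\setminus(\Omega)f\ne\emptyset$; an open cycle is an infinite cycle that is not forward. $(f)\mathrm{C}_n$ ($n\in\mathbb{Z}_+$) is the cardinal number of cycles of cardinality $n$; $(f)\mathrm{C}_{\mathrm{open}}$, $(f)\mathrm{C}_{\mathrm{fwd}}$ the numbers of open and forward cycles. $f\approx_{\mathrm{fin}}g$ means: $(f)\mathrm{C}_{\mathrm{open}}=(g)\mathrm{C}_{\mathrm{open}}$; $(f)\mathrm{C}_{\mathrm{fwd}}=(g)\mathrm{C}_{\mathrm{fwd}}$; $(f)\mathrm{C}_n\ne(g)\mathrm{C}_n$ for only finitely many $n$; and whenever $(f)\mathrm{C}_n\ne(g)\mathrm{C}_n$,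 both are finite. $f\approx_{\mathrm{even}} g$ means $f\approx_{\mathrm{fin}}g$ and $\sum_{n\in\mathbb{Z}_+}((f)\mathrm{C}_n-(g)\mathrm{C}_n)$ is an even integer, where a term is $0$ whenever $(f)\mathrm{C}_n=(g)\mathrm{C}_n$ (even if infinite). *)

(* Defs.v *)
From Stdlib Require Import List ZArith Arith.
Import ListNotations.

Set Implicit Arguments.

Definition countably_infinite (T : Type) : Prop :=
  exists e : nat -> T, (forall m n, e m = e n -> m = n) /\ (forall x, exists n, e n = x).

Definition injective_map {T : Type} (f : T -> T) : Prop :=
  forall x y, f x = f y -> x = y.

(* Maps are written on the right and composed left to right:
   (x)(f h) = ((x)f)h. *)
Definition compLR {T : Type} (f g : T -> T) : T -> T := fun x => g (f x).

Definition is_transposition {T : Type} (t : T -> T) : Prop :=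
  exists a b, a <> b /\ t a = b /\ t b = a /\
    (forall x, x <> a -> x <> b -> t x = x).

Definition in_Alt {T : Type} (h : T -> T) : Prop :=
  exists ts : list (T -> T),
    Forall is_transposition ts /\ Nat.even (length ts) = true /\
    (forall x, h x = fold_left (fun y t => t y) ts x).

Definition set_eq {T : Type} (A B : T -> Prop) : Prop := forall x, A x <-> B x.

Definition invariant {T : Type} (f : T -> T) (S : T -> Prop) : Prop :=
  forall a, S (f a) <-> S a.

Definition is_cycle {T : Type} (f : T -> T) (S : T -> Prop) : Prop :=
  (exists x, S x) /\ invariant f S /\
  (forall S' : T -> Prop, (forall x, S' x -> S x) -> (exists x, S' x) ->
      invariant f S' -> set_eq S' S).

Definition has_size {T : Type} (S : T -> Prop) (n : nat) : Prop :=
  exists l : list T, length l = n /\ NoDup l /\ (forall x, S x <-> In x l).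

Definition infinite_set {T : Type} (S : T -> Prop) : Prop :=
  forall l : list T, exists x, S x /\ ~ In x l.

Definition cycle_of_size {T : Type} (f : T -> T) (n : nat) (S : T -> Prop) : Prop :=
  is_cycle f S /\ has_size S n.

Definition forward_cycle {T : Type} (f : T -> T) (S : T -> Prop) : Prop :=
  is_cycle f S /\ infinite_set S /\ exists x, S x /\ forall y, f y <> x.

Definition open_cycle {T : Type} (f : T -> T) (S : T -> Prop) : Prop :=
  is_cycle f S /\ infinite_set S /\ ~ (exists x, S x /\ forall y, f y <> x).

(* ---------- cardinalities of families of subsets (up to extensional equality) ----------
   Since Omega is countable and cycles are disjoint, these cardinals lie in
   {0,1,2,...} U {aleph_0}. *)
Inductive card : Type := Fin (k : nat) | Inf.

Fixpoint distinct_sets {T : Type} (l : list (T -> Prop)) : Prop :=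
  match l with
  | [] => True
  | A :: l' => (forall B, In B l' -> ~ set_eq A B) /\ distinct_sets l'
  end.

Definition has_card {T : Type} (P : (T -> Prop) -> Prop) (c : card) : Prop :=
  match c with
  | Fin k => exists l : list (T -> Prop),
      length l = k /\ Forall P l /\ distinct_sets l /\
      (forall S, P S -> exists S', In S' l /\ set_eq S S')
  | Inf => forall k, exists l : list (T -> Prop),
      length l = k /\ Forall P l /\ distinct_sets l
  end.

Definition same_card {T : Type} (P Q : (T -> Prop) -> Prop) : Prop :=
  forall c, has_card P c <-> has_card Q c.

Definition sameC {T : Type} (f g : T -> T) (n : nat) : Prop :=
  same_card (cycle_of_size f n) (cycle_of_size g n).

Definition approx_fin {T : Type} (f g : T -> T) : Prop :=
  same_card (open_cycle f) (open_cycle g) /\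
  same_card (forward_cycle f) (forward_cycle g) /\
  (exists N, forall n, 0 < n -> N < n -> sameC f g n) /\
  (forall n, 0 < n -> ~ sameC f g n ->
     exists a b, has_card (cycle_of_size f n) (Fin a) /\
                 has_card (cycle_of_size g n) (Fin b)).

(* f ~even g : sum over n in Z_+ of ((f)C_n - (g)C_n) is even, where a term is 0 when
   (f)C_n = (g)C_n.  Terms with n > N vanish; for n <= N, either the counts agree
   (term 0, encoded by a n = b n) or they are the finite numbers a n, b n. *)
Definition approx_even {T : Type} (f g : T -> T) : Prop :=
  approx_fin f g /\
  exists N (a b : nat -> nat),
    (forall n, 0 < n -> N < n -> sameC f g n) /\
    (forall n, 0 < n -> n <= N ->
       (sameC f g n /\ a n = b n) \/
       (has_card (cycle_of_size f n) (Fin (a n)) /\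
        has_card (cycle_of_size g n) (Fin (b n)))) /\
    Z.even (fold_right Z.add 0%Z
              (map (fun n => (Z.of_nat (a n) - Z.of_nat (b n))%Z) (seq 1 N))) = true.

(* Main.v *)
Require Import Defs.
From Stdlib Require Import List ZArith Arith.

Definition swapn (a b i : nat) : nat :=
  if Nat.eqb i a then b else if Nat.eqb i b then a else i.
Definition applyswaps (ps : list (nat*nat)) (i : nat) : nat :=
  fold_left (fun j p => swapn (fst p) (snd p) j) ps i.
Definition evenswaps m (tau : nat -> nat) := exists ps,
  Forall (fun p => fst p < m /\ snd p < m /\ fst p <> snd p) ps /\
  Nat.even (length ps) = true /\ forall i, i < m -> tau i = applyswaps ps i.
Definition is_perm_on m (s : nat -> nat) :=
  (forall i, i < m -> s i < m) /\ (forall i j, i < m -> j < m -> s i = s j -> i = j).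
Definition cyc_ok m (s : nat -> nat) (c : list nat) :=
  NoDup c /\ c <> nil /\ (forall i, In i c -> i < m /\ In (s i) c) /\
  (forall i j, In i c -> In j c -> exists k, j = Nat.iter k s i).
Definition decomp m s ie L ce :=
  Forall (cyc_ok m s) L /\ cyc_ok m s ce /\ In ie ce /\
  (forall i, i < m -> In i ce \/ exists c, In c L /\ In i c) /\
  (forall c i, In c L -> In i c -> ~ In i ce) /\
  (forall c1 c2 i, In c1 L -> In c2 L -> In i c1 -> In i c2 -> c1 = c2) /\ NoDup L.

Module MC.
From mathcomp Require Import all_boot all_fingroup.

Lemma In_mem (T : eqType) (x : T) (s : seq T) : List.In x s <-> x \in s.
Proof.
elim: s => [|y s IH] //=; rewrite in_cons; split.
- by case=> [->|/IH ->]; rewrite ?eqxx ?orbT.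
- by case/orP=> [/eqP ->|/IH]; [left|right].
Qed.

Lemma uniq_NoDup (T : eqType) (s : seq T) : uniq s -> NoDup s.
Proof.
elim: s => [|x s IH] /=; first by constructor.
case/andP=> nx us; constructor; last exact: IH.
by move/In_mem; apply/negP.
Qed.

Lemma iter_nat (A : Type) k (g : A -> A) x : Nat.iter k g x = iter k g x.
Proof. by elim: k => //= k ->. Qed.

Section Dec.
Variable n' : nat.
Local Notation n := n'.+1.
Variable s : {perm 'I_n}.
Variable sg : nat -> nat.
Hypothesis Hs : forall j : 'I_n, val (s j) = sg (val j).
Variable ie : 'I_n.

Definition cl (X : {set 'I_n}) : seq nat := [seq val j | j <- enum X].
Definition Oe := porbit s ie.
Definition LL := [seq cl X | X <- enum (porbits s :\ Oe)].

Lemma insubd_val (j : 'I_n) : insubd ie (val j) = j.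
Proof. by apply: val_inj; rewrite val_insubd ltn_ord. Qed.

Lemma mem_cl X i : (i \in cl X) = (i < n) && (insubd ie i \in X).
Proof.
apply/mapP/idP.
- case=> j; rewrite mem_enum => jO ->; rewrite ltn_ord /=.
  by rewrite insubd_val.
- case/andP=> lt iO; exists (insubd ie i); first by rewrite mem_enum.
  by rewrite val_insubd lt.
Qed.

Lemma iter_val k (j : 'I_n) : val (iter k s j) = Nat.iter k sg (val j).
Proof. elim: k => //= k IH; rewrite Hs; congr (sg _); exact: IH. Qed.

Lemma cl_ok x : cyc_ok n sg (cl (porbit s x)).
Proof.
split; first by apply: uniq_NoDup; rewrite map_inj_uniq ?enum_uniq //; apply: val_inj.
split.
  move=> E; have : val x \in cl (porbit s x).
    by apply: map_f; rewrite mem_enum porbit_id.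
  by rewrite E.
split.
- move=> i /In_mem /mapP [j]; rewrite mem_enum => jO ->; split; first by apply/ltP; apply: ltn_ord.
  apply/In_mem; rewrite -Hs; apply: map_f; rewrite mem_enum.
  case/porbitP: jO => k ->; rewrite -permM -expgSr; apply/porbitP; by exists k.+1.
- move=> i i' /In_mem /mapP [j]; rewrite mem_enum => jO ->.
  move=> /In_mem /mapP [j']; rewrite mem_enum => j'X ->.
  have : j' \in porbit s j.
    case/porbitP: jO => k Ek; by rewrite Ek porbit_perm.
  case/porbitP=> k ->; exists k; by rewrite permX iter_val.
Qed.

Lemma porbit_eq {x y z} : z \in porbit s x -> z \in porbit s y -> porbit s x = porbit s y.
Proof.
case/porbitP=> a ->; case/porbitP=> b E.
have Ey : porbit s y = porbit s ((s ^+ b)%g y) by rewrite porbit_perm.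
by rewrite Ey -E porbit_perm.
Qed.

Lemma cl_inj : injective cl.
Proof.
move=> X1 X2 E; apply/setP=> j.
have := mem_cl X1 (val j); rewrite E mem_cl.
by rewrite insubd_val ltn_ord /= => ->.
Qed.

Lemma in_porbits X : X \in porbits s -> exists x, X = porbit s x.
Proof. by case/imsetP=> x _ ->; exists x. Qed.
Arguments in_porbits {X}.

Lemma dec_ok : decomp n sg (val ie) LL (cl Oe).
Proof.
split.
  apply/Forall_forall=> c /In_mem /mapP [X]; rewrite mem_enum => /setD1P [_ XP] ->.
  by case: (in_porbits XP) => x ->; apply: cl_ok.
split; first exact: cl_ok.
split; first by apply/In_mem; apply: map_f; rewrite mem_enum porbit_id.
split.
  move=> i /ltP lt; set j := Ordinal lt.
  have jP : porbit s j \in porbits s by apply: imset_f.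
  case: (boolP (porbit s j == Oe)) => [/eqP E|NE].
    left; apply/In_mem; rewrite (_ : i = val j) //; apply: map_f.
    by rewrite mem_enum -E porbit_id.
  right; exists (cl (porbit s j)); split.
    by apply/In_mem; apply: map_f; rewrite mem_enum; apply/setD1P.
  by apply/In_mem; rewrite (_ : i = val j) //; apply: map_f; rewrite mem_enum porbit_id.
split.
  move=> c i /In_mem /mapP [X]; rewrite mem_enum => /setD1P [NE XP] -> /In_mem.
  rewrite mem_cl => /andP [lt iO] /In_mem; rewrite mem_cl => /andP [_ iOe].
  case: (in_porbits XP) NE iO => x -> NE iO.
  by move/eqP: NE; apply; apply: porbit_eq iO iOe.
split.
  move=> c1 c2 i /In_mem /mapP [X1]; rewrite mem_enum => /setD1P [_ X1P] ->.
  move=> /In_mem /mapP [X2]; rewrite mem_enum => /setD1P [_ X2P] ->.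
  move=> /In_mem; rewrite mem_cl => /andP [_ i1] /In_mem; rewrite mem_cl => /andP [_ i2].
  case: (in_porbits X1P) i1 => x ->; case: (in_porbits X2P) i2 => y -> i2 i1.
  by rewrite (porbit_eq i1 i2).
apply: uniq_NoDup; rewrite map_inj_uniq ?enum_uniq //; exact: cl_inj.
Qed.

Lemma size_LL : (size LL).+1 = #|porbits s|.
Proof.
rewrite size_map -cardE (cardsD1 Oe (porbits s)) (_ : Oe \in porbits s = true) //.
exact: imset_f.
Qed.

End Dec.

Section Par.
Variable n' : nat.
Local Notation n := n'.+1.

Definition Fn (sg : nat -> nat) (i : 'I_n) : 'I_n := insubd i (sg i).

Lemma Fn_val sg i : (sg (val i) < n) -> val (Fn sg i) = sg (val i).
Proof. by move=> H; rewrite val_insubd H. Qed.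

Lemma Fn_inj sg : is_perm_on n sg -> injective (Fn sg).
Proof.
case=> H1 H2 i j E; apply: val_inj.
have hi : sg (val i) < n by apply/ltP; apply: H1; apply/ltP; exact: ltn_ord.
have hj : sg (val j) < n by apply/ltP; apply: H1; apply/ltP; exact: ltn_ord.
apply: H2; try (apply/ltP; exact: ltn_ord).
by rewrite -Fn_val // E Fn_val.
Qed.

Definition tp (p : nat * nat) : {perm 'I_n} := tperm (inord p.1) (inord p.2).
Definition Pp (ps : seq (nat*nat)) : {perm 'I_n} := \prod_(p <- ps) tp p.

Lemma Pp_val ps : Forall (fun p => fst p < n /\ snd p < n /\ fst p <> snd p)%coq_nat ps ->
  forall j : 'I_n, nat_of_ord (Pp ps j) = applyswaps ps (nat_of_ord j) /\ odd_perm (Pp ps) = odd (size ps).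
Proof.
elim: ps => [|p ps IH] Hf j.
  by rewrite /Pp big_nil perm1 odd_perm1.
inversion Hf as [|? ? [h1 [h2 h3]] Hf']; subst.
move/ltP: h1 => h1; move/ltP: h2 => h2.
rewrite /Pp big_cons -/(Pp ps) permM odd_permM /=.
have [IH1 IH2] := IH Hf' (tp p j); split; last first.
  rewrite IH2 /tp odd_tperm.
  have -> : (inord p.1 != inord p.2 :> 'I_n) = true; last by [].
  apply/negP=> /eqP E; apply: h3.
  by have := congr1 (@nat_of_ord _) E; rewrite !inordK // => ->.
rewrite IH1; congr applyswaps.
rewrite /tp /swapn; case: tpermP.
- by move=> ->; rewrite !inordK // PeanoNat.Nat.eqb_refl.
- move=> ->; rewrite !inordK //; case: PeanoNat.Nat.eqb_spec => // E.
  by rewrite PeanoNat.Nat.eqb_refl.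
- move=> na nb.
  case: PeanoNat.Nat.eqb_spec => E1.
    by move: na; rewrite -E1; have -> : inord (nat_of_ord j) = j by apply/val_inj; rewrite /= inordK.
  case: PeanoNat.Nat.eqb_spec => E2 //.
  by move: nb; rewrite -E2; have -> : inord (nat_of_ord j) = j by apply/val_inj; rewrite /= inordK.
Qed.

End Par.

Lemma even_odd k : Nat.even k = ~~ odd k.
Proof. elim: k => // k IH; rewrite Nat.even_succ -Nat.negb_even IH /=; by case: (odd k). Qed.

Lemma length_size (T : Type) (s : seq T) : length s = size s.
Proof. by elim: s => //= x s ->. Qed.

Lemma mc_parity m s1 s2 tau ie :
  is_perm_on m s1 -> lt ie m -> evenswaps m tau ->
  ((forall i, lt i m -> s2 i = tau (s1 i)) \/ (forall i, lt i m -> s2 i = s1 (tau i))) ->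
  exists L1 c1 L2 c2, decomp m s1 ie L1 c1 /\ decomp m s2 ie L2 c2 /\
    Nat.even (length L1) = Nat.even (length L2).
Proof.
case: m => [|n'] Hp Hie; first by inversion Hie.
case=> ps [Hf [Hev Htau]] H12.
set P1 := perm (@Fn_inj n' s1 Hp).
have E1 : forall j : 'I_n'.+1, val (P1 j) = s1 (val j).
  move=> j; rewrite permE Fn_val //; apply/ltP; apply: (proj1 Hp); apply/ltP; exact: ltn_ord.
have Et : forall j : 'I_n'.+1, val (Pp n' ps j) = tau (val j).
  by move=> j; rewrite Htau; [exact: (proj1 (@Pp_val n' ps Hf j)) | apply/ltP; exact: ltn_ord].
have Odt : odd_perm (Pp n' ps) = false.
  rewrite (proj2 (@Pp_val n' ps Hf ord0)).
  by move: Hev; rewrite even_odd length_size; case: (odd _).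
set ie' : 'I_n'.+1 := Ordinal (introT ltP Hie).
have key : forall P2 : {perm 'I_n'.+1}, (forall j, val (P2 j) = s2 (val j)) ->
   odd_perm P2 = odd_perm P1 ->
   exists L1 c1 L2 c2, decomp n'.+1 s1 ie L1 c1 /\ decomp n'.+1 s2 ie L2 c2 /\
    Nat.even (length L1) = Nat.even (length L2).
  move=> P2 E2 Od.
  exists (LL n' P1 ie'), (cl n' (Oe n' P1 ie')), (LL n' P2 ie'), (cl n' (Oe n' P2 ie')).
  split; first exact: (@dec_ok n' P1 s1 E1 ie').
  split; first exact: (@dec_ok n' P2 s2 E2 ie').
  move: Od; rewrite /odd_perm -(size_LL n' P1 ie') -(size_LL n' P2 ie') /= !even_odd !length_size.
  by move/addbI => /= /negb_inj ->.
case: H12 => H.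
- apply: (key (P1 * Pp n' ps)%g).
    move=> j; rewrite permM Et E1 H //; apply/ltP; exact: ltn_ord.
  by rewrite odd_permM Odt addbF.
- apply: (key (Pp n' ps * P1)%g).
    move=> j; rewrite permM E1 Et H //; apply/ltP; exact: ltn_ord.
  by rewrite odd_permM Odt.
Qed.

End MC.
From Stdlib Require Import List ZArith Arith Lia Classical ClassicalEpsilon.
Import ListNotations.

Section Basics.
Context {T : Type}.
Implicit Types (g : T -> T) (S : T -> Prop).

Definition conn g x y := exists i j, Nat.iter i g x = Nat.iter j g y.

Lemma iter_succ_r g k x : Nat.iter (S k) g x = Nat.iter k g (g x).
Proof. induction k; simpl; auto. simpl in IHk. rewrite IHk. reflexivity. Qed.

Lemma iter_add g a b x : Nat.iter (a + b) g x = Nat.iter a g (Nat.iter b g x).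
Proof. induction a; simpl; congruence. Qed.

Lemma conn_refl g x : conn g x x.
Proof. exists 0, 0. reflexivity. Qed.

Lemma conn_sym g x y : conn g x y -> conn g y x.
Proof. intros [i [j H]]. exists j, i. auto. Qed.

Lemma conn_trans g x y z : conn g x y -> conn g y z -> conn g x z.
Proof.
intros [i [j H1]] [k [l H2]]. exists (k + i), (j + l).
rewrite iter_add, H1, <- iter_add, Nat.add_comm, iter_add, H2, <- iter_add.
reflexivity.
Qed.

Lemma conn_iter g x k : conn g x (Nat.iter k g x).
Proof. exists k, 0. reflexivity. Qed.

Lemma conn_step g x : conn g x (g x).
Proof. exact (conn_iter g x 1). Qed.

Lemma inv_iter g S : invariant g S -> forall k a, S (Nat.iter k g a) <-> S a.
Proof.
intros H k; induction k; intros a; simpl. tauto.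
rewrite (H (Nat.iter k g a)). apply IHk.
Qed.

Lemma inv_closed g S x y : invariant g S -> S x -> conn g x y -> S y.
Proof.
intros H Sx [i [j E]].
apply (inv_iter g S H j). rewrite <- E. apply (inv_iter g S H i). auto.
Qed.

Lemma conn_inv g x : invariant g (conn g x).
Proof.
intros a; split; intros Hc.
- destruct Hc as [i [j E]]. exists i, (S j). rewrite iter_succ_r. auto.
- eapply conn_trans; [apply Hc| apply conn_step].
Qed.

Lemma class_cycle g x : is_cycle g (conn g x).
Proof.
split; [exists x; apply conn_refl|]. split; [apply conn_inv|].
intros S' Hsub [y Hy] Hinv z; split; auto.
intros Hz. apply (inv_closed g S' y z Hinv Hy).
eapply conn_trans; [apply conn_sym, Hsub, Hy | exact Hz].
Qed.

Lemma cycle_eq g S x : is_cycle g S -> S x -> set_eq S (conn g x).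
Proof.
intros [_ [Hinv Hmin]] Sx.
assert (set_eq (conn g x) S) as E.
{ apply Hmin. intros y Hy. eapply inv_closed; eauto.
  exists x. apply conn_refl. apply conn_inv. }
intros y; split; apply E.
Qed.

Lemma cycle_ext g S S' : is_cycle g S -> set_eq S S' -> is_cycle g S'.
Proof.
intros [[x Sx] [Hinv Hmin]] E. split; [exists x; apply E; auto|]. split.
- intros a. rewrite <- (E (g a)), <- (E a). apply Hinv.
- intros S'' Hs Hne Hi y. rewrite <- (E y).
  revert y. apply Hmin; auto. intros z Hz. apply E; auto.
Qed.

Lemma cycle_iff g S : is_cycle g S <-> exists x, S x /\ set_eq S (conn g x).
Proof.
split.
- intros H. destruct H as [[x Sx] HH] eqn:EE. exists x. split; auto.
  apply cycle_eq; auto.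
- intros [x [Sx E]]. eapply cycle_ext; [apply (class_cycle g x)|].
  intros y; split; apply E.
Qed.

Lemma cycle_conn_eq g S x y : is_cycle g S -> S x -> S y -> conn g x y.
Proof. intros H Sx Sy. apply (cycle_eq g S x H Sx). auto. Qed.

Lemma set_eq_sym S S' : set_eq S S' -> set_eq S' S.
Proof. intros E x; split; apply E. Qed.

Lemma set_eq_trans S1 S2 S3 : set_eq S1 S2 -> set_eq S2 S3 -> set_eq S1 S3.
Proof. intros E1 E2 x. rewrite (E1 x). apply E2. Qed.

End Basics.
From Stdlib Require Import List ZArith Arith Lia Classical ClassicalEpsilon.
Import ListNotations.

Lemma iter_inj (T : Type) (g : T -> T) : injective_map g ->
  forall k a b, Nat.iter k g a = Nat.iter k g b -> a = b.
Proof. intros Hg k; induction k; simpl; intros a b H; auto. Qed.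
Arguments iter_inj {T}.

Lemma NoDup_map_on (A B : Type) (f : A -> B) (l : list A) :
  (forall x y, In x l -> In y l -> f x = f y -> x = y) -> NoDup l -> NoDup (map f l).
Proof.
induction l as [|a l IH]; simpl; intros Hi Hn; constructor.
- inversion Hn; subst. intros Hin. apply in_map_iff in Hin as [y [E Hy]].
  assert (y = a) by (apply Hi; auto). subst. contradiction.
- inversion Hn; subst. apply IH; auto.
Qed.

Lemma infinite_ext (T : Type) (S S' : T -> Prop) : set_eq S S' -> infinite_set S -> infinite_set S'.
Proof. intros E H l. destruct (H l) as [x [Sx Nx]]. exists x. split; auto. apply E; auto. Qed.

Lemma distinct_map (T A : Type) (P : A -> (T -> Prop)) (L : list A) :
  NoDup L -> (forall c1 c2, In c1 L -> In c2 L -> set_eq (P c1) (P c2) -> c1 = c2) ->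
  distinct_sets (map P L).
Proof.
induction L as [|c L IH]; simpl; intros Hn Hi; auto.
inversion Hn; subst. split.
- intros B HB E. apply in_map_iff in HB as [c2 [<- Hc2]].
  assert (c = c2) by (apply Hi; auto). subst. contradiction.
- apply IH; auto.
Qed.

Section G.
Context {T : Type}.
Variables (g q : T -> T) (W : list T) (e : T).
Hypothesis Hg : injective_map g.
Hypothesis HeW : In e W.
Hypothesis HqW : forall x, In x W -> In (q x) W.
Hypothesis Hqg : forall x, In x W -> x <> e -> q x = g x.
Hypothesis Hesc : forall k, ~ In (Nat.iter k g (g e)) W.

Definition Tcyc_ok (c : list T) := NoDup c /\ c <> [] /\
  (forall x, In x c -> In x W /\ In (q x) c) /\
  (forall x y, In x c -> In y c -> exists k, y = Nat.iter k q x).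

Definition Tdecomp (L : list (list T)) (ce : list T) :=
  Forall Tcyc_ok L /\ Tcyc_ok ce /\ In e ce /\
  (forall x, In x W -> In x ce \/ exists c, In c L /\ In x c) /\
  (forall c x, In c L -> In x c -> ~ In x ce) /\
  (forall c1 c2 x, In c1 L -> In c2 L -> In x c1 -> In x c2 -> c1 = c2) /\ NoDup L.

Lemma G1 c : Tcyc_ok c -> ~ In e c -> forall x0, In x0 c ->
  set_eq (fun x => In x c) (conn g x0).
Proof.
intros [Hnd [Hne [Hcl Hco]]] He x0 Hx0.
assert (qg : forall x, In x c -> q x = g x).
{ intros x Hx. apply Hqg. apply Hcl; auto. intros ->; auto. }
assert (itq : forall k x, In x c -> Nat.iter k q x = Nat.iter k g x /\ In (Nat.iter k q x) c).
{ induction k; simpl; intros x Hx; auto. destruct (IHk x Hx) as [E1 E2].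
  rewrite <- E1. split; [apply qg; auto| apply Hcl; auto]. }
assert (back : forall j y, In (Nat.iter j g y) c -> In y c).
{ induction j; intros y Hy; auto.
  rewrite iter_succ_r in Hy.
  apply IHj in Hy. set (u := g y) in *.
  assert (Hqu : In (q u) c) by (apply Hcl; auto).
  destruct (Hco (q u) u Hqu Hy) as [k Ek].
  destruct k as [|k].
  - simpl in Ek. assert (y = u). { apply Hg. rewrite <- (qg u Hy). auto. }
    rewrite H; auto.
  - set (v := Nat.iter k q (q u)).
    assert (Hv : In v c) by (apply itq; auto).
    assert (Hqv : q v = u) by (rewrite Ek; reflexivity).
    assert (y = v). { apply Hg. rewrite <- (qg v Hv). rewrite Hqv. reflexivity. }
    rewrite H; auto. }
intros y; split; intros Hy.
- destruct (Hco x0 y Hx0 Hy) as [k Ek]. exists k, 0. simpl.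
  rewrite Ek. symmetry. apply itq; auto.
- destruct Hy as [i [j E]]. apply (back j). rewrite <- E.
  destruct (itq i x0 Hx0) as [E1 E2]. rewrite <- E1. auto.
Qed.

Lemma G1cyc c : Tcyc_ok c -> ~ In e c ->
  is_cycle g (fun x => In x c) /\ has_size (fun x => In x c) (length c).
Proof.
intros Hc He. split.
- pose proof Hc as [Hnd [Hne _]]. destruct c as [|x0 c']; [congruence|].
  apply cycle_iff. exists x0. split; [left; auto|]. apply G1; auto. left; auto.
- exists c. split; auto. split; [apply Hc|]. tauto.
Qed.

Lemma Gpath : forall k x, In x W -> Nat.iter k q x = e -> conn g x e.
Proof.
induction k; intros x Hx E.
- simpl in E. subst. apply conn_refl.
- rewrite iter_succ_r in E. destruct (classic (x = e)) as [->|Ne]; [apply conn_refl|].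
  rewrite Hqg in E; auto.
  eapply conn_trans; [apply conn_step| apply IHk; auto].
  rewrite <- Hqg; auto.
Qed.

Lemma iter_distinct : forall i j, i < j -> Nat.iter i g e <> Nat.iter j g e.
Proof.
intros i j Hij E.
replace j with (i + (j - i)) in E by lia. rewrite iter_add in E.
apply iter_inj in E; auto.
destruct (j - i) as [|d] eqn:Ed; [lia|].
rewrite iter_succ_r in E. apply (Hesc d). rewrite <- E. auto.
Qed.

Lemma Ginf : infinite_set (conn g e).
Proof.
intros l. apply NNPP. intros Hn.
assert (Hall : forall k, In (Nat.iter k g e) l).
{ intros k. apply NNPP. intros Hk. apply Hn. exists (Nat.iter k g e). split; auto. apply conn_iter. }
assert (Hnd : NoDup (map (fun k => Nat.iter k g e) (seq 0 (S (length l))))).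
{ apply NoDup_map_on; [|apply seq_NoDup].
  intros x y _ _ E. destruct (Nat.lt_trichotomy x y) as [H|[H|H]]; auto.
  - exfalso. eapply iter_distinct; eauto.
  - exfalso. eapply iter_distinct; eauto. }
apply NoDup_incl_length with (l' := l) in Hnd.
- rewrite length_map, length_seq in Hnd. lia.
- intros x Hx. apply in_map_iff in Hx as [k [<- _]]. auto.
Qed.

Lemma G2 L ce S x : Tdecomp L ce -> is_cycle g S -> S x -> In x W ->
  (S e /\ infinite_set S) \/ exists c, In c L /\ ~ In e c /\ set_eq S (fun y => In y c).
Proof.
intros [HL [Hce [Hece [Hcov [Hdisj [Heq HnL]]]]]] HS Sx HxW.
destruct (Hcov x HxW) as [Hx|[c [Hc Hx]]].
- left. destruct Hce as [_ [_ [_ Hco]]].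
  destruct (Hco x e Hx Hece) as [k Ek].
  assert (Hc : conn g x e) by (apply (Gpath k); auto).
  assert (Se : S e) by (apply (cycle_eq g S x HS Sx); auto).
  split; auto. apply infinite_ext with (S := conn g e); [|apply Ginf].
  apply set_eq_sym. apply cycle_eq; auto.
- right. exists c. assert (Hne : ~ In e c) by (intros H; apply (Hdisj c e Hc H); auto).
  split; auto. split; auto.
  apply set_eq_trans with (conn g x); [apply cycle_eq; auto|].
  apply set_eq_sym. apply G1; auto. rewrite Forall_forall in HL. auto.
Qed.

Lemma Gdist L ce : Tdecomp L ce -> distinct_sets (map (fun c => fun x => In x c) L).
Proof.
intros [HL [Hce [Hece [Hcov [Hdisj [Heq HnL]]]]]].
apply distinct_map; auto. intros c1 c2 H1 H2 E.
rewrite Forall_forall in HL. destruct (HL c1 H1) as [_ [Hne _]].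
destruct c1 as [|x c1']; [congruence|].
apply (Heq _ _ x); auto. left; auto. apply E. left; auto.
Qed.

End G.
From Stdlib Require Import List ZArith Arith Lia Classical ClassicalEpsilon.
Import ListNotations.

Section Idx.
Context {T : Type}.
Variable dec : forall x y : T, {x = y} + {x <> y}.

Fixpoint idx (x : T) (l : list T) : nat :=
  match l with [] => 0 | y :: l' => if dec x y then 0 else S (idx x l') end.

Lemma idx_lt x l : In x l -> idx x l < length l.
Proof.
induction l as [|y l IH]; simpl; intros H; [contradiction|].
destruct (dec x y); [lia|]. destruct H as [->|H]; [congruence|]. specialize (IH H). lia.
Qed.

Lemma nth_idx x l d : In x l -> nth (idx x l) l d = x.
Proof.
induction l as [|y l IH]; simpl; intros H; [contradiction|].
destruct (dec x y); [auto|]. destruct H as [->|H]; [congruence|]. auto.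
Qed.

Lemma idx_nth l d i : NoDup l -> i < length l -> idx (nth i l d) l = i.
Proof.
revert i; induction l as [|y l IH]; simpl; intros i Hn Hi; [lia|].
inversion Hn; subst. destruct i as [|i].
- destruct (dec y y); congruence.
- destruct (dec (nth i l d) y) as [E|E].
  + exfalso. apply H1. rewrite <- E. apply nth_In. lia.
  + f_equal. apply IH; auto. lia.
Qed.

Variables (W : list T) (e : T).
Hypothesis HWnd : NoDup W.
Hypothesis HeW : In e W.
Let m := length W.
Let w i := nth i W e.

Lemma w_In i : i < m -> In (w i) W.
Proof. intros. apply nth_In. auto. Qed.

Lemma w_inj i j : i < m -> j < m -> w i = w j -> i = j.
Proof. intros Hi Hj E. rewrite <- (idx_nth W e i), <- (idx_nth W e j); auto. unfold w in E. congruence. Qed.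

Lemma w_idx x : In x W -> w (idx x W) = x.
Proof. intros. apply nth_idx; auto. Qed.

Section Q.
Variable q : T -> T.
Hypothesis HqW : forall x, In x W -> In (q x) W.
Hypothesis Hqi : forall x y, In x W -> In y W -> q x = q y -> x = y.
Definition sq (i : nat) : nat := idx (q (w i)) W.

Lemma sq_perm : is_perm_on m sq.
Proof.
split.
- intros i Hi. apply idx_lt. apply HqW, w_In; auto.
- intros i j Hi Hj E. unfold sq in E. apply w_inj; auto.
  apply Hqi; try apply w_In; auto.
  rewrite <- (w_idx (q (w i))), <- (w_idx (q (w j))); try apply HqW, w_In; auto; congruence.
Qed.

Lemma w_sq i : i < m -> w (sq i) = q (w i).
Proof. intros Hi. apply w_idx. apply HqW, w_In; auto. Qed.

Lemma w_iter k i : i < m -> w (Nat.iter k sq i) = Nat.iter k q (w i) /\ Nat.iter k sq i < m.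
Proof.
induction k; simpl; intros Hi; auto. destruct (IHk Hi) as [E1 E2].
split. rewrite w_sq; auto. congruence. apply sq_perm; auto.
Qed.

Lemma tr_cyc c : cyc_ok m sq c -> Tcyc_ok q W (map w c).
Proof.
intros [Hnd [Hne [Hcl Hco]]]. split; [|split; [|split]].
- apply NoDup_map_on; auto. intros x y Hx Hy. apply w_inj; apply Hcl; auto.
- destruct c; simpl; congruence.
- intros x Hx. apply in_map_iff in Hx as [i [<- Hi]]. destruct (Hcl i Hi) as [H1 H2].
  split; [apply w_In; auto|]. rewrite <- w_sq; auto. apply in_map; auto.
- intros x y Hx Hy. apply in_map_iff in Hx as [i [<- Hi]]. apply in_map_iff in Hy as [j [<- Hj]].
  destruct (Hco i j Hi Hj) as [k ->]. exists k. apply w_iter. apply Hcl; auto.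
Qed.

Lemma tr_decomp L ce : decomp m sq (idx e W) L ce ->
  Tdecomp q W e (map (map w) L) (map w ce).
Proof.
intros [HL [Hce [Hie [Hcov [Hdisj [Heq Hnd]]]]]].
assert (Hlt : forall c i, In c L -> In i c -> i < m).
{ intros c i Hc Hi. rewrite Forall_forall in HL. apply (HL c Hc); auto. }
assert (Hltce : forall i, In i ce -> i < m) by (intros i Hi; apply Hce; auto).
split; [|split; [|split; [|split; [|split; [|split]]]]].
- rewrite Forall_forall in *. intros c Hc. apply in_map_iff in Hc as [c0 [<- Hc0]].
  apply tr_cyc; auto.
- apply tr_cyc; auto.
- rewrite <- (w_idx e); auto. apply in_map; auto.
- intros x Hx. rewrite <- (w_idx x); auto. destruct (Hcov (idx x W)) as [H|[c [Hc Hi]]].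
  + apply idx_lt; auto.
  + left. apply in_map; auto.
  + right. exists (map w c). split; apply in_map; auto.
- intros c x Hc Hx Hx'. apply in_map_iff in Hc as [c0 [<- Hc0]].
  apply in_map_iff in Hx as [i [<- Hi]]. apply in_map_iff in Hx' as [j [Ej Hj]].
  assert (j = i) by (apply w_inj; eauto). subst. eapply Hdisj; eauto.
- intros c1 c2 x H1 H2 Hx1 Hx2.
  apply in_map_iff in H1 as [d1 [<- Hd1]]. apply in_map_iff in H2 as [d2 [<- Hd2]].
  apply in_map_iff in Hx1 as [i [<- Hi]]. apply in_map_iff in Hx2 as [j [Ej Hj]].
  assert (j = i) by (apply w_inj; eauto). subst. f_equal. eapply Heq; eauto.
- apply NoDup_map_on; auto. intros c1 c2 H1 H2 E.
  rewrite Forall_forall in HL. destruct (HL c1 H1) as [_ [Hne _]].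
  destruct c1 as [|i c1']; [congruence|].
  assert (Hw : In (w i) (map w c2)) by (rewrite <- E; left; auto).
  apply in_map_iff in Hw as [j [Ej Hj]].
  assert (j = i). { apply w_inj; [eapply Hlt; eauto | eapply Hlt; [exact H1| left; auto] | exact Ej]. } subst.
  eapply Heq; eauto. left; auto.
Qed.

End Q.

Definition tspec (t : T -> T) a b := a <> b /\ t a = b /\ t b = a /\
  (forall x, x <> a -> x <> b -> t x = x).

Lemma tspec_inj t a b : tspec t a b -> forall x y, t x = t y -> x = y.
Proof.
intros [Hab [Ha [Hb Ho]]].
assert (inv : forall x, t (t x) = x).
{ intros x. destruct (dec x a) as [->|Na]; [congruence|].
  destruct (dec x b) as [->|Nb]; [congruence|]. rewrite (Ho x Na Nb). apply Ho; auto. }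
intros x y E. rewrite <- (inv x), <- (inv y). congruence.
Qed.

Lemma fold_inj (ts : list (T -> T)) :
  (forall t, In t ts -> forall x y, t x = t y -> x = y) ->
  forall x y, fold_left (fun y t => t y) ts x = fold_left (fun y t => t y) ts y -> x = y.
Proof.
induction ts as [|t ts IH]; simpl; intros Ht x y E; auto.
apply (Ht t (or_introl eq_refl)). apply IH; auto. intros t' H. apply Ht. right. exact H.
Qed.

Lemma swaps_of ts : (forall t, In t ts -> exists a b, tspec t a b /\ In a W /\ In b W) ->
  exists ps, length ps = length ts /\
   Forall (fun p => fst p < m /\ snd p < m /\ fst p <> snd p) ps /\
   forall i, i < m -> fold_left (fun y t => t y) ts (w i) = w (applyswaps ps i) /\ applyswaps ps i < m.
Proof.
induction ts as [|t ts IH]; simpl; intros Hts.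
- exists []. simpl. repeat split; auto.
- destruct (IH (fun t' H => Hts t' (or_intror H))) as [ps [Hl [Hf Hw]]].
  destruct (Hts t (or_introl eq_refl)) as [a [b [[Hab [Ha [Hb Ho]]] [HaW HbW]]]].
  exists ((idx a W, idx b W) :: ps). simpl. split; [congruence|]. split.
  + constructor; auto. simpl. split; [apply idx_lt; auto|]. split; [apply idx_lt; auto|].
    intros E. apply Hab. rewrite <- (w_idx a) by auto. rewrite <- (w_idx b) by auto. rewrite E. reflexivity.
  + intros i Hi. change (applyswaps ((idx a W, idx b W) :: ps) i) with (applyswaps ps (swapn (idx a W) (idx b W) i)). simpl fold_left.
    assert (Hs : t (w i) = w (swapn (idx a W) (idx b W) i) /\ swapn (idx a W) (idx b W) i < m).
    { unfold swapn. destruct (Nat.eqb_spec i (idx a W)) as [E1|E1].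
      - subst. rewrite w_idx; auto. split; [rewrite w_idx; auto| apply idx_lt; auto].
      - destruct (Nat.eqb_spec i (idx b W)) as [E2|E2].
        + subst. rewrite w_idx; auto. split; [rewrite w_idx; auto| apply idx_lt; auto].
        + split; auto. apply Ho.
          * intros E. apply E1. rewrite <- E. symmetry. apply idx_nth; auto.
          * intros E. apply E2. rewrite <- E. symmetry. apply idx_nth; auto. }
    destruct Hs as [Hs1 Hs2]. rewrite Hs1. apply Hw; auto.
Qed.

Lemma T_parity (p h q2 : T -> T) (ts : list (T -> T)) :
  (forall x, In x W -> In (p x) W) ->
  (forall x y, In x W -> In y W -> p x = p y -> x = y) ->
  (forall t, In t ts -> exists a b, tspec t a b /\ In a W /\ In b W) ->
  Nat.even (length ts) = true ->
  (forall x, h x = fold_left (fun y t => t y) ts x) ->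
  ((forall x, q2 x = h (p x)) \/ (forall x, q2 x = p (h x))) ->
  exists L1 ce1 L2 ce2, Tdecomp p W e L1 ce1 /\ Tdecomp q2 W e L2 ce2 /\
    Nat.even (length L1) = Nat.even (length L2).
Proof.
intros HpW Hpi Hts Hev Hh Hq2.
destruct (swaps_of ts Hts) as [ps [Hl [Hf Hw]]].
assert (hinj : forall x y, h x = h y -> x = y).
{ intros x y. rewrite !Hh. apply fold_inj. intros t Ht.
  destruct (Hts t Ht) as [a [b [Hs _]]]. eapply tspec_inj; eauto. }
assert (hW : forall x, In x W -> In (h x) W).
{ intros x Hx. rewrite <- (w_idx x), Hh; auto. rewrite (proj1 (Hw _ (idx_lt _ _ Hx))).
  apply w_In. apply Hw. apply idx_lt; auto. }
assert (q2W : forall x, In x W -> In (q2 x) W).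
{ intros x Hx. destruct Hq2 as [H|H]; rewrite H; auto. }
assert (q2i : forall x y, In x W -> In y W -> q2 x = q2 y -> x = y).
{ intros x y Hx Hy. destruct Hq2 as [H|H]; rewrite !H; intros E; auto. }
set (tau := fun i => idx (h (w i)) W).
assert (Htau : evenswaps m tau).
{ exists ps. split; auto. split; [congruence|]. intros i Hi. unfold tau.
  rewrite Hh, (proj1 (Hw i Hi)). apply idx_nth; auto. apply Hw; auto. }
assert (Hie : idx e W < m) by (apply idx_lt; auto).
destruct (MC.mc_parity m (sq p) (sq q2) tau (idx e W) (sq_perm p HpW Hpi) Hie Htau) as
  [L1 [c1 [L2 [c2 [D1 [D2 Hpar]]]]]].
{ destruct Hq2 as [H|H]; [left|right]; intros i Hi; unfold sq, tau; rewrite H.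
  - rewrite (w_idx (p (w i))); auto. apply HpW, w_In; auto.
  - rewrite (w_idx (h (w i))); auto. apply hW, w_In; auto. }
exists (map (map w) L1), (map w c1), (map (map w) L2), (map w c2).
split; [apply tr_decomp; auto|]. split; [apply tr_decomp; auto|].
rewrite !length_map. auto.
Qed.

End Idx.
From Stdlib Require Import List ZArith Arith Lia Classical ClassicalEpsilon.
Import ListNotations.

Section Per.
Context {T : Type}.
Variable f : T -> T.
Hypothesis Hf : injective_map f.

Lemma iter_mul P x : Nat.iter P f x = x -> forall n, Nat.iter (n * P) f x = x.
Proof. intros H n; induction n; simpl; auto. rewrite iter_add, IHn. auto. Qed.

Lemma periodic_class P x : 0 < P -> Nat.iter P f x = x ->
  forall y, conn f x y -> In y (map (fun k => Nat.iter k f x) (seq 0 P)).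
Proof.
intros HP Hx y [a [b E]].
set (t := a + b * (P - 1)).
assert (Ey : y = Nat.iter t f x).
{ apply (iter_inj f Hf b). rewrite <- iter_add.
  replace (b + t) with (a + b * P) by (unfold t; destruct P; [lia|]; nia).
  rewrite iter_add, iter_mul; auto. }
assert (Et : Nat.iter t f x = Nat.iter (t mod P) f x).
{ clearbody t. assert (Ht : t = t mod P + (t / P) * P).
  { rewrite Nat.mul_comm, Nat.add_comm. apply Nat.div_mod_eq. }
  transitivity (Nat.iter (t mod P + t / P * P) f x); [f_equal; exact Ht|].
  rewrite iter_add, iter_mul; auto. }
rewrite Ey, Et. apply (in_map (fun k => Nat.iter k f x)). apply in_seq. split; [lia|]. simpl. apply Nat.mod_upper_bound. lia.
Qed.

Lemma periodic_of_bounded x l : (forall k, In (Nat.iter k f x) l) ->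
  exists P, 0 < P /\ Nat.iter P f x = x.
Proof.
intros Hl. apply NNPP. intros Hn.
assert (Hnd : NoDup (map (fun k => Nat.iter k f x) (seq 0 (S (length l))))).
{ apply NoDup_map_on; [|apply seq_NoDup].
  intros i j _ _ E. apply NNPP. intros Nij. apply Hn.
  destruct (Nat.lt_trichotomy i j) as [H|[H|H]]; [|contradiction|].
  - exists (j - i). split; [lia|]. apply (iter_inj f Hf i). rewrite <- iter_add.
    replace (i + (j - i)) with j by lia. auto.
  - exists (i - j). split; [lia|]. apply (iter_inj f Hf j). rewrite <- iter_add.
    replace (j + (i - j)) with i by lia. auto. }
apply NoDup_incl_length with (l' := l) in Hnd.
- rewrite length_map, length_seq in Hnd. lia.
- intros y Hy. apply in_map_iff in Hy as [k [<- _]]. auto.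
Qed.

Lemma finite_class x : ~ infinite_set (conn f x) ->
  exists P, 0 < P /\ Nat.iter P f x = x.
Proof.
intros H. apply NNPP. intros Hn. apply H. intros l. apply NNPP. intros Hl.
apply Hn. apply (periodic_of_bounded x l). intros k. apply NNPP. intros Hk. apply Hl.
exists (Nat.iter k f x). split; auto. apply conn_iter.
Qed.

Lemma finite_class_list x : ~ infinite_set (conn f x) ->
  exists l, forall y, conn f x y <-> In y l.
Proof.
intros H. destruct (finite_class x H) as [P [HP Hx]].
exists (map (fun k => Nat.iter k f x) (seq 0 P)). intros y; split.
- apply periodic_class; auto.
- intros Hy. apply in_map_iff in Hy as [k [<- _]]. apply conn_iter.
Qed.

Lemma finite_preimage x : ~ infinite_set (conn f x) -> exists y, f y = x.
Proof.
intros H. destruct (finite_class x H) as [P [HP Hx]].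
destruct P as [|P]; [lia|]. exists (Nat.iter P f x). auto.
Qed.

End Per.

Section Constr.
Context {T : Type}.
Variable dec : forall x y : T, {x = y} + {x <> y}.
Variables (f : T -> T) (I : T -> Prop).
Hypothesis Hf : injective_map f.
Hypothesis HIc : is_cycle f I.
Hypothesis HIinf : infinite_set I.
Hypothesis HIu : forall S, is_cycle f S -> infinite_set S -> set_eq S I.

Lemma I_closed x y : I x -> conn f x y -> I y.
Proof. intros Hx Hc. apply (inv_closed f I x y); auto. apply (proj1 (proj2 HIc)). Qed.

Lemma notI_finite d : ~ I d -> ~ infinite_set (conn f d).
Proof. intros Hd Hinf. apply Hd. apply (HIu _ (class_cycle f d) Hinf). apply conn_refl. Qed.

Lemma seg_start (D : list T) : exists s M, I s /\
  forall d, In d D -> I d -> exists k, k < M /\ d = Nat.iter k f s.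
Proof.
induction D as [|d D IH].
- destruct HIc as [[s Hs] _]. exists s, 0. split; auto. intros d [].
- destruct IH as [s [M [Hs HM]]].
  destruct (classic (I d)) as [Hd|Hd].
  + destruct (cycle_conn_eq f I s d HIc Hs Hd) as [i [j E]].
    destruct (le_lt_dec j i) as [Hji|Hji].
    * exists s, (M + (i - j) + 1). split; auto. intros d' [<-|Hd'] Id'.
      -- exists (i - j). split; [lia|]. apply (iter_inj f Hf j). rewrite <- iter_add.
         replace (j + (i - j)) with i by lia. auto.
      -- destruct (HM d' Hd' Id') as [k [Hk ->]]. exists k. split; [lia|auto].
    * exists d, (M + (j - i) + 1). split; auto. intros d' [<-|Hd'] Id'.
      -- exists 0. split; [lia|auto].
      -- destruct (HM d' Hd' Id') as [k [Hk ->]]. exists (k + (j - i)). split; [lia|].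
         rewrite iter_add. f_equal. apply (iter_inj f Hf i). rewrite <- iter_add.
         replace (i + (j - i)) with j by lia. auto.
  + exists s, M. split; auto. intros d' [<-|Hd'] Id'; [contradiction|]. auto.
Qed.

Lemma iter_s_distinct s : I s -> forall i j, Nat.iter i f s = Nat.iter j f s -> i = j.
Proof.
intros Hs.
assert (key : forall i j, i < j -> Nat.iter i f s <> Nat.iter j f s).
{ intros i j Hij E.
  assert (Hp : Nat.iter (j - i) f s = s).
  { apply (iter_inj f Hf i). rewrite <- iter_add. replace (i + (j - i)) with j by lia. auto. }
  destruct (HIinf (map (fun k => Nat.iter k f s) (seq 0 (j - i)))) as [y [Iy Ny]].
  apply Ny. apply periodic_class; auto. lia.
  apply (cycle_eq f I s HIc Hs); auto. }
intros i j E. destruct (Nat.lt_trichotomy i j) as [H|[H|H]]; auto.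
- exfalso. eapply key; eauto.
- exfalso. eapply key; eauto.
Qed.

Lemma fin_part (D : list T) : exists l, forall y,
  In y l <-> exists d, In d D /\ ~ I d /\ conn f d y.
Proof.
induction D as [|d D IH].
- exists []. intros y; split; [intros []|intros [d [[] _]]].
- destruct IH as [l Hl]. destruct (classic (I d)) as [Hd|Hd].
  + exists l. intros y. rewrite Hl. split.
    * intros [d' [H1 H2]]. exists d'. split; [right|]; auto.
    * intros [d' [[<-|H1] H2]]; [tauto|]. exists d'. auto.
  + destruct (finite_class_list f Hf d (notI_finite d Hd)) as [l' Hl'].
    exists (l ++ l'). intros y. rewrite in_app_iff, Hl, <- Hl'. split.
    * intros [[d' [H1 H2]]|H]; [exists d'; split; [right|]; auto|].
      exists d. split; [left|]; auto.
    * intros [d' [[<-|H1] H2]]; [right; tauto|]. left. exists d'. auto.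
Qed.

Lemma construct (D : list T) : exists W e p,
  NoDup W /\ In e W /\ I e /\ (forall d, In d D -> In d W) /\ ~ In e D /\
  (forall d, In d D -> In (f d) W) /\ (forall x, In x W -> In (p x) W) /\
  (forall x y, In x W -> In y W -> p x = p y -> x = y) /\
  (forall x, In x W -> x <> e -> p x = f x) /\
  (forall k, ~ In (Nat.iter k f (f e)) W).
Proof.
destruct (seg_start D) as [s [M [Hs HM]]].
destruct (fin_part D) as [lF HlF].
set (W := nodup dec (lF ++ map (fun k => Nat.iter k f s) (seq 0 (S M)))).
assert (HW : forall x, In x W <-> (exists d, In d D /\ ~ I d /\ conn f d x) \/
                                  (exists k, k <= M /\ x = Nat.iter k f s)).
{ intros x. unfold W. rewrite nodup_In, in_app_iff, HlF, in_map_iff. split.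
  - intros [H|[k [<- Hk]]]; [left; auto|right]. exists k. apply in_seq in Hk. split; [lia|auto].
  - intros [H|[k [Hk ->]]]; [left; auto|right]. exists k. split; auto. apply in_seq. lia. }
set (e := Nat.iter M f s).
set (p := fun x => if dec x e then s else f x).
assert (Ie : I e) by (apply (I_closed s); auto; apply conn_iter).
assert (dist := iter_s_distinct s Hs).
assert (notfin : forall x d, I x -> In d D -> ~ I d -> conn f d x -> False).
{ intros x d Ix _ Nd Hc. apply Nd. apply (I_closed x); auto. apply conn_sym; auto. }
assert (Iiter : forall k, I (Nat.iter k f s)) by (intros k; apply (I_closed s); auto; apply conn_iter).
exists W, e, p. split; [apply NoDup_nodup|]. split; [apply HW; right; exists M; auto|].
split; auto. split.
{ intros d Hd. apply HW. destruct (classic (I d)) as [Id|Nd].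
  - right. destruct (HM d Hd Id) as [k [Hk ->]]. exists k. split; [lia|auto].
  - left. exists d. split; auto. split; auto. apply conn_refl. }
split.
{ intros He. destruct (HM e He Ie) as [k [Hk Ek]]. apply dist in Ek. lia. }
split.
{ intros d Hd. apply HW. destruct (classic (I d)) as [Id|Nd].
  - right. destruct (HM d Hd Id) as [k [Hk ->]]. exists (S k). split; [lia|auto].
  - left. exists d. split; auto. split; auto. apply conn_step. }
split.
{ intros x Hx. unfold p. destruct (dec x e) as [->|Ne].
  - apply HW. right. exists 0. split; [lia|auto].
  - apply HW. apply HW in Hx as [[d [H1 [H2 H3]]]|[k [Hk ->]]].
    + left. exists d. split; auto. split; auto. eapply conn_trans; [exact H3|apply conn_step].
    + right. exists (S k). split; auto. destruct (Nat.eq_dec k M) as [->|]; [contradiction|lia]. }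
split.
{ assert (key : forall y, In y W -> y <> e -> s = f y -> False).
  { intros y Hy Ne E. apply HW in Hy as [[d [H1 [H2 H3]]]|[k [Hk ->]]].
    - apply (notfin s d Hs H1 H2). eapply conn_trans; [exact H3|]. rewrite E. apply conn_step.
    - assert (k <> M) by (intros ->; contradiction).
      change (f (Nat.iter k f s)) with (Nat.iter (S k) f s) in E.
      apply (dist 0 (S k)) in E. lia. }
  intros x y Hx Hy E. unfold p in E.
  destruct (dec x e) as [Ex|Nx]; destruct (dec y e) as [Ey|Ny].
  - congruence.
  - exfalso. apply (key y); auto.
  - exfalso. apply (key x); auto.
  - apply Hf. auto. }
split.
{ intros x _ Ne. unfold p. destruct (dec x e); [contradiction|auto]. }
intros k Hk. apply HW in Hk as [[d [H1 [H2 H3]]]|[k' [Hk' Ek]]].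
- apply (notfin _ d (Iiter (S k + M)) H1 H2).
  replace (Nat.iter (S k + M) f s) with (Nat.iter k f (f e)); auto.
  rewrite iter_add. unfold e. rewrite <- iter_succ_r. reflexivity.
- assert (Nat.iter k f (f e) = Nat.iter (S k + M) f s).
  { rewrite iter_add. unfold e. rewrite <- iter_succ_r. reflexivity. }
  rewrite H in Ek. apply dist in Ek. lia.
Qed.

End Constr.
From Stdlib Require Import List ZArith Arith Lia Classical ClassicalEpsilon.
Import ListNotations.

Section Gen.
Context {T : Type}.
Implicit Types (P Q : (T -> Prop) -> Prop) (S : T -> Prop).

Lemma same_card_ext P Q : (forall S, P S <-> Q S) -> same_card P Q.
Proof.
intros H c. assert (Hf : forall l, Forall P l <-> Forall Q l).
{ intros l. rewrite !Forall_forall. split; intros H' x Hx; apply H; auto. }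
destruct c as [k|]; simpl; split.
- intros [l [H1 [H2 [H3 H4]]]]. exists l. rewrite <- Hf. repeat split; auto.
  intros S HS. apply H4, H; auto.
- intros [l [H1 [H2 [H3 H4]]]]. exists l. rewrite Hf. repeat split; auto.
  intros S HS. apply H4, H; auto.
- intros H1 k. destruct (H1 k) as [l [? [? ?]]]. exists l. rewrite <- Hf. auto.
- intros H1 k. destruct (H1 k) as [l [? [? ?]]]. exists l. rewrite Hf. auto.
Qed.

Lemma card1 P J : (forall S, P S <-> set_eq S J) -> forall c, has_card P c <-> c = Fin 1.
Proof.
intros H c. split.
- destruct c as [k|]; simpl.
  + intros [l [Hl [HF [Hd Hc]]]]. rewrite Forall_forall in HF.
    destruct l as [|A [|B l]]; simpl in *.
    * destruct (Hc J) as [S' [[] _]]. apply H. intros x; tauto.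
    * subst; auto.
    * exfalso. destruct Hd as [Hd _]. apply (Hd B); [left; auto|].
      apply set_eq_trans with J; [apply H, HF; auto|apply set_eq_sym, H, HF; auto].
  + intros Hi. destruct (Hi 2) as [l [Hl [HF Hd]]]. rewrite Forall_forall in HF.
    destruct l as [|A [|B [|C l]]]; simpl in *; try lia.
    exfalso. destruct Hd as [Hd _]. apply (Hd B); [left; auto|].
    apply set_eq_trans with J; [apply H, HF; auto|apply set_eq_sym, H, HF; auto].
- intros ->. simpl. exists [J]. split; auto. split.
  + constructor; auto. apply H. intros x; tauto.
  + split; [simpl; split; auto; intros _ []|].
    intros S HS. exists J. split; [left; auto|]. apply H; auto.
Qed.

Lemma card0 P : (forall S, ~ P S) -> forall c, has_card P c <-> c = Fin 0.
Proof.
intros H c. split.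
- destruct c as [k|]; simpl.
  + intros [l [Hl [HF _]]]. destruct l as [|A l]; simpl in *; [subst; auto|].
    inversion HF; subst. exfalso. eapply H; eauto.
  + intros Hi. destruct (Hi 1) as [l [Hl [HF _]]].
    destruct l as [|A l]; simpl in *; [lia|]. inversion HF; subst. exfalso. eapply H; eauto.
- intros ->. simpl. exists []. repeat split; auto. intros S HS. exfalso. eapply H; eauto.
Qed.

Lemma distinct_filter (b : (T -> Prop) -> bool) (l : list (T -> Prop)) : distinct_sets l -> distinct_sets (filter b l).
Proof.
induction l as [|A l IH]; simpl; auto. intros [H1 H2].
destruct (b A); simpl; auto. split; auto.
intros B HB. apply filter_In in HB as [HB _]. auto.
Qed.

Lemma distinct_app (l1 l2 : list (T -> Prop)) : distinct_sets l1 -> distinct_sets l2 ->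
  (forall A B, In A l1 -> In B l2 -> ~ set_eq A B) -> distinct_sets (l1 ++ l2).
Proof.
induction l1 as [|A l1 IH]; simpl; auto. intros [H1 H2] Hd2 Hx. split.
- intros B HB. apply in_app_iff in HB as [HB|HB]; auto.
- apply IH; auto.
Qed.

Lemma has_size_uniq S n k : has_size S n -> has_size S k -> n = k.
Proof.
intros [l1 [E1 [N1 H1]]] [l2 [E2 [N2 H2]]]. subst.
apply Nat.le_antisymm; apply NoDup_incl_length; auto; intros x Hx.
- apply H2, H1; auto.
- apply H1, H2; auto.
Qed.

Lemma has_size_notinf S n : has_size S n -> ~ infinite_set S.
Proof.
intros [l [_ [_ H]]] Hi. destruct (Hi l) as [x [Sx Nx]]. apply Nx, H; auto.
Qed.

Lemma list_notinf (c : list T) : ~ infinite_set (fun x => In x c).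
Proof. intros Hi. destruct (Hi c) as [x [H1 H2]]. auto. Qed.

End Gen.

Definition zsum (F : nat -> Z) (l : list nat) : Z := fold_right Z.add 0%Z (map F l).

Lemma zsum_ext F G l : (forall n, In n l -> F n = G n) -> zsum F l = zsum G l.
Proof. unfold zsum. intros H. f_equal. apply map_ext_in. auto. Qed.

Lemma zsum_sub F G l : zsum (fun n => F n - G n)%Z l = (zsum F l - zsum G l)%Z.
Proof. unfold zsum. induction l; simpl; lia. Qed.

Lemma zsum_add F G l : zsum (fun n => F n + G n)%Z l = (zsum F l + zsum G l)%Z.
Proof. unfold zsum. induction l; simpl; lia. Qed.

Lemma zsum_ind x s k : zsum (fun n => if Nat.eqb n x then 1%Z else 0%Z) (seq s k) =
  (if andb (Nat.leb s x) (Nat.ltb x (s + k)) then 1%Z else 0%Z).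
Proof.
unfold zsum. revert s. induction k; intros s; simpl.
- destruct (Nat.leb_spec s x); destruct (Nat.ltb_spec x (s + 0)); simpl; lia.
- rewrite IHk. destruct (Nat.eqb_spec s x);
  destruct (Nat.leb_spec s x); destruct (Nat.leb_spec (S s) x);
  destruct (Nat.ltb_spec x (S s + k)); destruct (Nat.ltb_spec x (s + S k)); simpl; lia.
Qed.

Lemma count_sizes {T : Type} (L : list (list T)) N :
  (forall c, In c L -> 1 <= length c <= N) ->
  zsum (fun n => Z.of_nat (length (filter (fun c => Nat.eqb (length c) n) L))) (seq 1 N) =
  Z.of_nat (length L).
Proof.
induction L as [|c L IH]; intros H.
- unfold zsum. induction (seq 1 N); simpl; auto.
- cbn [length]. rewrite (zsum_ext _ (fun n => (if Nat.eqb n (length c) then 1 else 0) +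
     Z.of_nat (length (filter (fun c0 => Nat.eqb (length c0) n) L)))%Z).
  + rewrite zsum_add, zsum_ind, IH by (intros; apply H; right; auto).
    destruct (H c (or_introl eq_refl)).
    rewrite (proj2 (Nat.leb_le 1 (length c))) by lia.
    rewrite (proj2 (Nat.ltb_lt (length c) (1 + N))) by lia. cbn [andb length]. lia.
  + intros n _. cbn [filter]. destruct (Nat.eqb_spec (length c) n); destruct (Nat.eqb_spec n (length c));
    cbn [length]; lia.
Qed.

Lemma finish {T : Type} (X Y : T -> T) N (a b : nat -> nat) :
  (forall n, 0 < n -> has_card (cycle_of_size X n) (Fin (a n))) ->
  (forall n, 0 < n -> has_card (cycle_of_size Y n) (Fin (b n))) ->
  (forall n, 0 < n -> N < n -> forall S, cycle_of_size X n S <-> cycle_of_size Y n S) ->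
  same_card (open_cycle X) (open_cycle Y) -> same_card (forward_cycle X) (forward_cycle Y) ->
  Z.even (zsum (fun n => Z.of_nat (a n) - Z.of_nat (b n))%Z (seq 1 N)) = true ->
  approx_even X Y.
Proof.
intros Ha Hb Hn Ho Hw Hev.
assert (HC : forall n, 0 < n -> N < n -> sameC X Y n).
{ intros n H1 H2. apply same_card_ext. apply Hn; auto. }
split; [split; [auto|split; [auto|split]]|].
- exists N. auto.
- intros n H _. exists (a n), (b n). auto.
- exists N, a, b. split; [auto|]. split; [intros n H1 H2; right; auto|auto].
Qed.

Section PerMap.
Context {T : Type}.
Variables (X qX : T -> T) (W : list T) (e : T) (L : list (list T)) (ce : list T).
Hypothesis HX : injective_map X.
Hypothesis HeW : In e W.
Hypothesis HqW : forall x, In x W -> In (qX x) W.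
Hypothesis HqX : forall x, In x W -> x <> e -> qX x = X x.
Hypothesis Hesc : forall k, ~ In (Nat.iter k X (X e)) W.
Hypothesis HD : Tdecomp qX W e L ce.

Definition meets (S : T -> Prop) := exists x, In x W /\ S x.

Lemma pm_noe c : In c L -> ~ In e c.
Proof. intros Hc H. destruct HD as [_ [_ [He [_ [Hd _]]]]]. apply (Hd c e Hc H He). Qed.

Lemma pm_ok c : In c L -> Tcyc_ok qX W c.
Proof. intros Hc. destruct HD as [HL _]. rewrite Forall_forall in HL. auto. Qed.

Lemma pm_size n S : cycle_of_size X n S -> meets S ->
  exists c, In c L /\ set_eq S (fun y => In y c) /\ length c = n.
Proof.
intros [HS Hs] [x [Hx Sx]].
destruct (G2 X qX W e HX HeW HqW HqX Hesc L ce S x HD HS Sx Hx) as [[_ Hi]|[c [Hc [_ E]]]].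
- exfalso. eapply has_size_notinf; eauto.
- exists c. split; auto. split; auto. apply (has_size_uniq S); auto.
  exists c. split; auto. split; [apply (pm_ok c Hc)|]. intros y. apply E.
Qed.

Lemma pm_Bok n : Forall (cycle_of_size X n)
  (map (fun c => fun x => In x c) (filter (fun c => Nat.eqb (length c) n) L)).
Proof.
apply Forall_forall. intros S HS. apply in_map_iff in HS as [c [<- Hc]].
apply filter_In in Hc as [Hc Hl]. apply Nat.eqb_eq in Hl. subst n.
apply (G1cyc X qX W e HX HqX c (pm_ok c Hc) (pm_noe c Hc)).
Qed.

Lemma pm_Bdist n : distinct_sets
  (map (fun c => fun x => In x c) (filter (fun c => Nat.eqb (length c) n) L)).
Proof.
destruct HD as [HL [Hce [Hece [Hcov [Hdisj [Heq HnL]]]]]].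
apply distinct_map; [apply NoDup_filter; auto|].
intros c1 c2 H1 H2 E. apply filter_In in H1 as [H1 _]. apply filter_In in H2 as [H2 _].
destruct (pm_ok c1 H1) as [_ [Hne _]].
destruct c1 as [|x c1']; [congruence|].
apply (Heq _ _ x); auto. left; auto. apply E. left; auto.
Qed.

Lemma pm_meets c : In c L -> meets (fun x => In x c).
Proof.
intros Hc. destruct (pm_ok c Hc) as [_ [Hne [Hcl _]]].
destruct c as [|x c']; [congruence|]. exists x. split; [apply Hcl|]; left; auto.
Qed.

Lemma pm_bound c : In c L -> 1 <= length c <= length W.
Proof.
intros Hc. destruct (pm_ok c Hc) as [Hnd [Hne [Hcl _]]]. split.
- destruct c; [congruence|simpl; lia].
- apply NoDup_incl_length; auto. intros x Hx. apply Hcl; auto.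
Qed.

Lemma pm_inf S : is_cycle X S -> infinite_set S -> meets S -> S e.
Proof.
intros HS Hi [x [Hx Sx]].
destruct (G2 X qX W e HX HeW HqW HqX Hesc L ce S x HD HS Sx Hx) as [[He _]|[c [Hc [_ E]]]]; auto.
exfalso. apply (list_notinf c). eapply infinite_ext; eauto.
Qed.

End PerMap.

Section Shared.
Context {T : Type}.
Variables (X Y : T -> T) (W : list T).
Hypothesis Hag : forall a, ~ In (X a) W \/ ~ In (Y a) W -> Y a = X a.

Lemma shared S : is_cycle X S -> ~ meets W S -> is_cycle Y S.
Proof.
intros [Hne [Hinv Hmin]] Hm.
assert (nW : forall x, S x -> ~ In x W) by (intros x Sx Hx; apply Hm; exists x; auto).
assert (HYX : forall a, S a -> Y a = X a).
{ intros a Sa. apply Hag. left. apply nW. apply Hinv. auto. }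
split; auto. split.
- intros a. split; intros H.
  + assert (E : Y a = X a) by (apply Hag; right; apply nW; auto).
    apply Hinv. rewrite <- E. auto.
  + rewrite HYX; auto. apply Hinv; auto.
- intros S' Hsub HS' Hinv'. apply Hmin; auto.
  intros a. destruct (classic (S a)) as [Sa|Na].
  + rewrite <- (HYX a Sa). apply Hinv'.
  + split; intros H; exfalso; apply Na; [apply Hinv|]; apply Hsub; auto.
Qed.

End Shared.

Section Types.
Context {T : Type}.
Variables (X : T -> T) (e : T).
Hypothesis HX : injective_map X.
Hypothesis Hall : forall S, is_cycle X S -> infinite_set S -> S e.
Hypothesis Hinf : infinite_set (conn X e).

Definition surj := forall y, exists x, X x = y.

Lemma inf_eq S : is_cycle X S -> infinite_set S -> set_eq S (conn X e).
Proof. intros HS Hi. apply cycle_eq; auto. apply Hall; auto. Qed.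

Lemma class_props S : set_eq S (conn X e) -> is_cycle X S /\ infinite_set S.
Proof.
intros E. split.
- apply cycle_ext with (conn X e); [apply class_cycle|apply set_eq_sym; auto].
- apply infinite_ext with (conn X e); auto. apply set_eq_sym; auto.
Qed.

Lemma types_surj : surj ->
  (forall S, open_cycle X S <-> set_eq S (conn X e)) /\ (forall S, ~ forward_cycle X S).
Proof.
intros Hs. split.
- intros S. split.
  + intros [HS [Hi _]]. apply inf_eq; auto.
  + intros E. destruct (class_props S E). split; auto. split; auto.
    intros [x [_ Hx]]. destruct (Hs x) as [y Hy]. apply (Hx y); auto.
- intros S [_ [_ [x [_ Hx]]]]. destruct (Hs x) as [y Hy]. apply (Hx y); auto.
Qed.

Lemma types_nsurj : ~ surj ->
  (forall S, forward_cycle X S <-> set_eq S (conn X e)) /\ (forall S, ~ open_cycle X S).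
Proof.
intros Hs.
assert (Hy : exists y, forall x, X x <> y).
{ apply NNPP. intros H. apply Hs. intros y. apply NNPP. intros H'. apply H. exists y.
  intros x Hx. apply H'. exists x; auto. }
destruct Hy as [y Hy].
assert (Hyi : infinite_set (conn X y)).
{ apply NNPP. intros H. destruct (finite_preimage X HX y H) as [x Hx]. apply (Hy x); auto. }
assert (Hye : conn X e y).
{ apply conn_sym. apply (Hall (conn X y) (class_cycle X y) Hyi). }
split.
- intros S. split.
  + intros [HS [Hi _]]. apply inf_eq; auto.
  + intros E. destruct (class_props S E). split; auto. split; auto.
    exists y. split; auto. apply E; auto.
- intros S [HS [Hi Hn]]. apply Hn. exists y. split; auto. apply (inf_eq S HS Hi); auto.
Qed.

End Types.
From Stdlib Require Import List ZArith Arith Lia Classical ClassicalEpsilon.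
Import ListNotations.

Lemma Zeven_nat n : Z.even (Z.of_nat n) = Nat.even n.
Proof.
induction n; auto. rewrite Nat2Z.inj_succ, Z.even_succ, Nat.even_succ, <- Z.negb_even,
  <- Nat.negb_even, IHn. auto.
Qed.

Lemma zsum_opp F G l : zsum (fun n => G n - F n)%Z l = (- zsum (fun n => F n - G n) l)%Z.
Proof. unfold zsum. induction l; simpl; lia. Qed.

Lemma same_card_sym {T : Type} (P Q : (T -> Prop) -> Prop) : same_card P Q -> same_card Q P.
Proof. intros H c. symmetry. apply H. Qed.

Section Asm.
Context {T : Type}.
Variables (f g p q : T -> T) (W : list T) (e : T) (L1 L2 : list (list T)) (ce1 ce2 : list T).
Hypothesis Hf : injective_map f.
Hypothesis Hg : injective_map g.
Hypothesis HeW : In e W.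
Hypothesis HpW : forall x, In x W -> In (p x) W.
Hypothesis Hpf : forall x, In x W -> x <> e -> p x = f x.
Hypothesis Hescf : forall k, ~ In (Nat.iter k f (f e)) W.
Hypothesis HqW : forall x, In x W -> In (q x) W.
Hypothesis Hqg : forall x, In x W -> x <> e -> q x = g x.
Hypothesis Hescg : forall k, ~ In (Nat.iter k g (g e)) W.
Hypothesis Hag : forall a, ~ In (f a) W \/ ~ In (g a) W -> g a = f a.
Hypothesis HD1 : Tdecomp p W e L1 ce1.
Hypothesis HD2 : Tdecomp q W e L2 ce2.
Hypothesis Hpar : Nat.even (length L1) = Nat.even (length L2).
Hypothesis Hinf_f : forall S, is_cycle f S -> infinite_set S -> S e.
Hypothesis Hsurj : surj f <-> surj g.
Hypothesis Hfin : forall n, 0 < n -> exists k, has_card (cycle_of_size f n) (Fin k).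

Lemma Hag' : forall a, ~ In (g a) W \/ ~ In (f a) W -> f a = g a.
Proof. intros a H. symmetry. apply Hag. tauto. Qed.

Lemma Hinf_g : forall S, is_cycle g S -> infinite_set S -> S e.
Proof.
intros S HS Hi. destruct (classic (meets W S)) as [Hm|Hm].
- apply (pm_inf g q W e L2 ce2 Hg HeW HqW Hqg Hescg HD2); auto.
- exfalso. apply Hm. exists e. split; auto. apply Hinf_f; auto.
  apply (shared g f W Hag' S HS Hm).
Qed.

Lemma open_same : same_card (open_cycle f) (open_cycle g) /\
  same_card (forward_cycle f) (forward_cycle g).
Proof.
assert (If := Ginf f W e Hf HeW Hescf). assert (Ig := Ginf g W e Hg HeW Hescg).
destruct (classic (surj f)) as [Hs|Hs].
- assert (Hs' : surj g) by (apply Hsurj; auto).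
  destruct (types_surj f e Hinf_f If Hs) as [A1 A2].
  destruct (types_surj g e Hinf_g Ig Hs') as [B1 B2].
  split; intros c.
  + rewrite (card1 _ _ A1), (card1 _ _ B1). tauto.
  + rewrite (card0 _ A2), (card0 _ B2). tauto.
- assert (Hs' : ~ surj g) by (rewrite <- Hsurj; auto).
  destruct (types_nsurj f e Hf Hinf_f If Hs) as [A1 A2].
  destruct (types_nsurj g e Hg Hinf_g Ig Hs') as [B1 B2].
  split; intros c.
  + rewrite (card0 _ A2), (card0 _ B2). tauto.
  + rewrite (card1 _ _ A1), (card1 _ _ B1). tauto.
Qed.

Lemma big_same n S : length W < n -> cycle_of_size f n S <-> cycle_of_size g n S.
Proof.
intros Hn.
assert (nm1 : forall S, cycle_of_size f n S -> ~ meets W S).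
{ intros S' HS Hm. destruct (pm_size f p W e L1 ce1 Hf HeW HpW Hpf Hescf HD1 n S' HS Hm)
    as [c [Hc [_ Hl]]]. destruct (pm_bound p W e L1 ce1 HD1 c Hc). lia. }
assert (nm2 : forall S, cycle_of_size g n S -> ~ meets W S).
{ intros S' HS Hm. destruct (pm_size g q W e L2 ce2 Hg HeW HqW Hqg Hescg HD2 n S' HS Hm)
    as [c [Hc [_ Hl]]]. destruct (pm_bound q W e L2 ce2 HD2 c Hc). lia. }
split; intros H; split; try apply H.
- apply (shared f g W Hag S); [apply H|apply nm1; auto].
- apply (shared g f W Hag' S); [apply H|apply nm2; auto].
Qed.

Lemma assembly : approx_even g f /\ approx_even f g.
Proof.
assert (Hch : forall n, exists l : list (T -> Prop), 0 < n ->
  Forall (cycle_of_size f n) l /\ distinct_sets l /\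
  forall S, cycle_of_size f n S -> exists S', In S' l /\ set_eq S S').
{ intros n. destruct (Nat.eq_dec n 0) as [->|Hn]; [exists []; lia|].
  destruct (Hfin n) as [k [l [_ H]]]; [lia|]. exists l. auto. }
set (lf := fun n => proj1_sig (constructive_indefinite_description _ (Hch n))).
assert (Hlf : forall n, 0 < n -> Forall (cycle_of_size f n) (lf n) /\ distinct_sets (lf n) /\
  forall S, cycle_of_size f n S -> exists S', In S' (lf n) /\ set_eq S S').
{ intros n. exact (proj2_sig (constructive_indefinite_description _ (Hch n))). }
set (mb := fun S : T -> Prop => if excluded_middle_informative (meets W S) then false else true).
set (A := fun n => filter mb (lf n)).
set (P := fun (c : list T) (x : T) => In x c).
set (B1 := fun n => map P (filter (fun c => Nat.eqb (length c) n) L1)).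
set (B2 := fun n => map P (filter (fun c => Nat.eqb (length c) n) L2)).
set (a := fun n => length (A n) + length (B1 n)).
set (b := fun n => length (A n) + length (B2 n)).
assert (HA : forall n S, 0 < n -> In S (A n) -> cycle_of_size f n S /\ ~ meets W S).
{ intros n S Hn HS. apply filter_In in HS as [HS Hm]. destruct (Hlf n Hn) as [H1 _].
  rewrite Forall_forall in H1. split; auto. unfold mb in Hm.
  destruct (excluded_middle_informative (meets W S)); [discriminate|auto]. }
assert (HAg : forall n S, 0 < n -> In S (A n) -> cycle_of_size g n S).
{ intros n S Hn HS. destruct (HA n S Hn HS) as [[H1 H2] H3]. split; auto.
  apply (shared f g W Hag S); auto. }
assert (HAd : forall n, 0 < n -> distinct_sets (A n)).
{ intros n Hn. apply distinct_filter. apply Hlf; auto. }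
assert (Hcross : forall n L ce (qX : T -> T), Tdecomp qX W e L ce ->
  forall S B, In S (A n) -> In B (map P (filter (fun c => Nat.eqb (length c) n) L)) -> ~ set_eq S B).
{ intros n L ce qX HD S B HS HB E. apply filter_In in HS as [_ Hm]. unfold mb in Hm.
  destruct (excluded_middle_informative (meets W S)) as [_|Nm]; [discriminate|].
  apply Nm. apply in_map_iff in HB as [c [<- Hc]]. apply filter_In in Hc as [Hc _].
  destruct (pm_meets f qX W e L ce Hf HD c Hc) as [x [Hx Px]]. exists x. split; auto. apply E. auto. }
assert (Hcov : forall n S X, 0 < n -> cycle_of_size X n S -> ~ meets W S ->
  cycle_of_size f n S -> exists S', In S' (A n) /\ set_eq S S').
{ intros n S X Hn _ Hm HS. destruct (Hlf n Hn) as [H1 [_ H3]].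
  destruct (H3 S HS) as [S' [HS' E]]. exists S'. split; auto.
  apply filter_In. split; auto. unfold mb.
  destruct (excluded_middle_informative (meets W S')) as [[x [Hx Sx]]|]; auto.
  exfalso. apply Hm. exists x. split; auto. apply E; auto. }
assert (Ca : forall n, 0 < n -> has_card (cycle_of_size f n) (Fin (a n))).
{ intros n Hn. exists (A n ++ B1 n). split; [apply length_app|]. split.
  { apply Forall_app. split; [apply Forall_forall; intros S HS; apply HA; auto|].
    apply (pm_Bok f p W e L1 ce1 Hf Hpf HD1). }
  split.
  { apply distinct_app; auto. apply (pm_Bdist f p W e L1 ce1 Hf HD1).
    intros S B HS HB. apply (Hcross n L1 ce1 p HD1); auto. }
  intros S HS. destruct (classic (meets W S)) as [Hm|Hm].
  - destruct (pm_size f p W e L1 ce1 Hf HeW HpW Hpf Hescf HD1 n S HS Hm) as [c [Hc [E Hl]]].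
    exists (P c). split; auto. apply in_or_app. right. apply in_map. apply filter_In.
    split; auto. apply Nat.eqb_eq; auto.
  - destruct (Hcov n S f Hn HS Hm HS) as [S' [H1 H2]]. exists S'. split; auto.
    apply in_or_app; left; auto. }
assert (Cb : forall n, 0 < n -> has_card (cycle_of_size g n) (Fin (b n))).
{ intros n Hn. exists (A n ++ B2 n). split; [apply length_app|]. split.
  { apply Forall_app. split; [apply Forall_forall; intros S HS; apply HAg; auto|].
    apply (pm_Bok g q W e L2 ce2 Hg Hqg HD2). }
  split.
  { apply distinct_app; auto. apply (pm_Bdist g q W e L2 ce2 Hg HD2).
    intros S B HS HB. apply (Hcross n L2 ce2 q HD2); auto. }
  intros S HS. destruct (classic (meets W S)) as [Hm|Hm].
  - destruct (pm_size g q W e L2 ce2 Hg HeW HqW Hqg Hescg HD2 n S HS Hm) as [c [Hc [E Hl]]].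
    exists (P c). split; auto. apply in_or_app. right. apply in_map. apply filter_In.
    split; auto. apply Nat.eqb_eq; auto.
  - assert (HSf : cycle_of_size f n S).
    { split; [|apply HS]. apply (shared g f W Hag' S); auto. apply HS. }
    destruct (Hcov n S f Hn HSf Hm HSf) as [S' [H1 H2]]. exists S'. split; auto.
    apply in_or_app; left; auto. }
assert (Hsum : zsum (fun n => Z.of_nat (a n) - Z.of_nat (b n))%Z (seq 1 (length W)) =
  (Z.of_nat (length L1) - Z.of_nat (length L2))%Z).
{ rewrite (zsum_ext _ (fun n => Z.of_nat (length (filter (fun c => Nat.eqb (length c) n) L1)) -
     Z.of_nat (length (filter (fun c => Nat.eqb (length c) n) L2)))%Z).
  - rewrite zsum_sub, !count_sizes; auto.
    + intros c Hc. apply (pm_bound q W e L2 ce2 HD2); auto.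
    + intros c Hc. apply (pm_bound p W e L1 ce1 HD1); auto.
  - intros n _. unfold a, b, B1, B2. rewrite !length_map. lia. }
assert (Hev : Z.even (Z.of_nat (length L1) - Z.of_nat (length L2)) = true).
{ rewrite Z.even_sub, !Zeven_nat, Hpar. destruct (Nat.even (length L2)); auto. }
destruct open_same as [Ho Hw].
split.
- apply (finish g f (length W) b a); auto.
  + intros n _ Hn S. symmetry. apply big_same; auto.
  + apply same_card_sym; auto.
  + apply same_card_sym; auto.
  + rewrite zsum_opp, Z.even_opp, Hsum. auto.
- apply (finish f g (length W) a b); auto.
  + intros n _ Hn S. apply big_same; auto.
  + rewrite Hsum. auto.
Qed.

End Asm.
From Stdlib Require Import List ZArith Arith Lia Classical ClassicalEpsilon.
Import ListNotations.

Section Fin.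
Context {T : Type}.

Lemma trans_D (ts : list (T -> T)) : Forall is_transposition ts -> exists D,
  (forall t, In t ts -> exists a b, tspec t a b /\ In a D /\ In b D) /\
  (forall t, In t ts -> forall x, ~ In x D -> t x = x) /\
  (forall t, In t ts -> forall x, In x D -> In (t x) D).
Proof.
induction ts as [|t ts IH]; intros Hf.
- exists []. repeat split; intros t [].
- inversion Hf as [|? ? Ht Hf']; subst. destruct (IH Hf') as [D [H1 [H2 H3]]].
  destruct Ht as [a [b [Hab [Ha [Hb Ho]]]]].
  exists (a :: b :: D). split; [|split].
  + intros t' [<-|Ht'].
    * exists a, b. split; [repeat split; auto|]. split; [left|right; left]; auto.
    * destruct (H1 t' Ht') as [a' [b' [Hs [Ha' Hb']]]]. exists a', b'.
      split; auto. split; right; right; auto.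
  + intros t' [<-|Ht'] x Hx.
    * apply Ho; intros ->; apply Hx; [left|right; left]; auto.
    * apply H2; auto. intros H; apply Hx; right; right; auto.
  + intros t' [<-|Ht'] x Hx.
    * destruct Hx as [<-|[<-|Hx]]; [rewrite Ha; right; left; auto|rewrite Hb; left; auto|].
      destruct (classic (x = a)) as [->|Na]; [rewrite Ha; right; left; auto|].
      destruct (classic (x = b)) as [->|Nb]; [rewrite Hb; left; auto|].
      rewrite Ho; auto. right; right; auto.
    * destruct (classic (In x D)) as [HD|ND]; [right; right; apply H3; auto|].
      rewrite (H2 t' Ht' x ND). auto.
Qed.

Lemma fold_fix (ts : list (T -> T)) D : (forall t, In t ts -> forall x, ~ In x D -> t x = x) ->
  forall x, ~ In x D -> fold_left (fun y t => t y) ts x = x.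
Proof.
induction ts as [|t ts IH]; simpl; intros H x Hx; auto.
rewrite (H t (or_introl eq_refl) x Hx). apply IH; auto.
Qed.

Lemma fold_pres (ts : list (T -> T)) D : (forall t, In t ts -> forall x, In x D -> In (t x) D) ->
  forall x, In x D -> In (fold_left (fun y t => t y) ts x) D.
Proof.
induction ts as [|t ts IH]; simpl; intros H x Hx; [auto|].
apply IH; [intros t' Ht'; apply H; right; auto | apply H; auto].
Qed.

Lemma fold_surj (ts : list (T -> T)) : (forall t, In t ts -> forall y, exists x, t x = y) ->
  forall y, exists x, fold_left (fun y t => t y) ts x = y.
Proof.
induction ts as [|t ts IH]; simpl; intros H y; [exists y; auto|].
destruct (IH (fun t' Ht' => H t' (or_intror Ht')) y) as [z Hz].
destruct (H t (or_introl eq_refl) z) as [x Hx]. exists x. rewrite Hx. auto.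
Qed.

Lemma iter_agree (f g : T -> T) (W : list T) y :
  (forall z, ~ In z W -> ~ In (f z) W -> g z = f z) ->
  (forall k, ~ In (Nat.iter k f y) W) -> forall k, Nat.iter k g y = Nat.iter k f y.
Proof.
intros Hag Hy k. induction k; simpl; auto. rewrite IHk. apply Hag.
- apply Hy.
- apply (Hy (S k)).
Qed.

End Fin.

Lemma I_of_cyc {T : Type} (f : T -> T) :
  (has_card (open_cycle f) (Fin 1) /\ has_card (forward_cycle f) (Fin 0)) \/
  (has_card (open_cycle f) (Fin 0) /\ has_card (forward_cycle f) (Fin 1)) ->
  exists I, is_cycle f I /\ infinite_set I /\
    forall S, is_cycle f S -> infinite_set S -> set_eq S I.
Proof.
intros [[H1 H0]|[H0 H1]].
- destruct H1 as [l [Hl [HF [_ Hc]]]]. destruct l as [|I [|]]; simpl in Hl; try lia.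
  inversion HF as [|? ? [HI [Hinf _]] _]; subst.
  exists I. split; auto. split; auto. intros S HS Hi.
  destruct (classic (exists x, S x /\ forall y, f y <> x)) as [Hx|Hx].
  + exfalso. destruct H0 as [l0 [Hl0 [_ [_ Hc0]]]]. destruct l0; simpl in Hl0; try lia.
    destruct (Hc0 S) as [S' [[] _]]. split; auto.
  + destruct (Hc S) as [S' [[<-|[]] E]]; auto. split; auto.
- destruct H1 as [l [Hl [HF [_ Hc]]]]. destruct l as [|I [|]]; simpl in Hl; try lia.
  inversion HF as [|? ? [HI [Hinf _]] _]; subst.
  exists I. split; auto. split; auto. intros S HS Hi.
  destruct (classic (exists x, S x /\ forall y, f y <> x)) as [Hx|Hx].
  + destruct (Hc S) as [S' [[<-|[]] E]]; auto. split; auto.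
  + exfalso. destruct H0 as [l0 [Hl0 [_ [_ Hc0]]]]. destruct l0; simpl in Hl0; try lia.
    destruct (Hc0 S) as [S' [[] _]]. split; auto.
Qed.

Theorem mainTheorem17 (T : Type) (HT : countably_infinite T)
  (f h : T -> T) (Hf : injective_map f)
  (Hcyc : (has_card (open_cycle f) (Fin 1) /\ has_card (forward_cycle f) (Fin 0)) \/
          (has_card (open_cycle f) (Fin 0) /\ has_card (forward_cycle f) (Fin 1)))
  (Hfin : forall n, 0 < n -> exists k, has_card (cycle_of_size f n) (Fin k))
  (Hh : in_Alt h) :
  approx_even (compLR f h) f /\ approx_even f (compLR h f).
Proof.
assert (dec : forall x y : T, {x = y} + {x <> y}) by (intros; apply excluded_middle_informative).
destruct (I_of_cyc f Hcyc) as [I [HIc [HIinf HIu]]].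
destruct Hh as [ts [Hts [Hev Hhf]]].
destruct (trans_D ts Hts) as [D [HD1 [HD2 HD3]]].
assert (hfix : forall x, ~ In x D -> h x = x) by (intros x Hx; rewrite Hhf; apply (fold_fix ts D); auto).
assert (hD : forall x, In x D -> In (h x) D) by (intros x Hx; rewrite Hhf; apply (fold_pres ts D); auto).
assert (hinj : forall x y, h x = h y -> x = y).
{ intros x y. rewrite !Hhf. apply fold_inj; auto. intros t Ht.
  destruct (HD1 t Ht) as [a [b [Hs _]]]. eapply tspec_inj; eauto. }
assert (hsurj : forall y, exists x, h x = y).
{ assert (Hs : forall t, In t ts -> forall y, exists x, t x = y).
  { intros t Ht y'. destruct (HD1 t Ht) as [a [b [[Hab [Ha [Hb Ho]]] _]]].
    exists (t y'). destruct (dec y' a) as [->|Na]; [congruence|].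
    destruct (dec y' b) as [->|Nb]; [congruence|]. rewrite (Ho y' Na Nb). apply Ho; auto. }
  intros y. destruct (fold_surj ts Hs y) as [x Hx]. exists x. rewrite Hhf. auto. }
destruct (construct dec f I Hf HIc HIinf HIu D) as
  [W [e [p [HWnd [HeW [Ie [HDW [HeD [HfD [HpW [Hpi [Hpf Hescf]]]]]]]]]]]].
assert (hW : forall x, In x W -> In (h x) W).
{ intros x Hx. destruct (classic (In x D)) as [H|H]; [apply HDW, hD; auto|rewrite hfix; auto]. }
assert (Hts' : forall t, In t ts -> exists a b, tspec t a b /\ In a W /\ In b W).
{ intros t Ht. destruct (HD1 t Ht) as [a [b [Hs [Ha Hb]]]]. exists a, b. auto. }
assert (Hinf_f : forall S, is_cycle f S -> infinite_set S -> S e).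
{ intros S HS Hi. apply (HIu S HS Hi). auto. }
assert (hfe : h (f e) = f e).
{ apply hfix. intros H. apply (Hescf 0). apply HDW; auto. }
assert (hee : h e = e) by (apply hfix; auto).
split.
-
  set (g := compLR f h).
  destruct (T_parity dec W e HWnd HeW p h (fun x => h (p x)) ts HpW Hpi Hts' Hev Hhf
     (or_introl (fun x => eq_refl))) as [L1 [ce1 [L2 [ce2 [D1 [D2 Hpar]]]]]].
  assert (Hag : forall a, ~ In (f a) W \/ ~ In (g a) W -> g a = f a).
  { intros a Ha. unfold g, compLR. apply hfix. intros HfaD.
    destruct Ha as [Ha|Ha]; apply Ha; [apply HDW; auto|apply HDW, hD; auto]. }
  assert (Hg : injective_map g) by (intros x y E; apply Hf, hinj; auto).
  assert (Hescg : forall k, ~ In (Nat.iter k g (g e)) W).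
  { intros k. replace (g e) with (f e) by (unfold g, compLR; auto).
    rewrite (iter_agree f g W (f e));
    [apply Hescf | intros z Hz Hfz; apply Hag; auto | apply Hescf]. }
  assert (Hsurj : surj f <-> surj g).
  { unfold surj, g, compLR. split.
    - intros Hs y. destruct (hsurj y) as [z <-]. destruct (Hs z) as [x <-]. exists x; auto.
    - intros Hs y. destruct (Hs (h y)) as [x Hx]. exists x. apply hinj; auto. }
  assert (HqW : forall x, In x W -> In (h (p x)) W) by (intros x Hx; apply hW, HpW; auto).
  assert (Hqg : forall x, In x W -> x <> e -> h (p x) = g x).
  { intros x Hx Ne. unfold g, compLR. rewrite Hpf; auto. }
  exact (proj1 (assembly f g p (fun x => h (p x)) W e L1 L2 ce1 ce2 Hf Hg HeW HpW Hpf Hescf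
    HqW Hqg Hescg Hag D1 D2 Hpar Hinf_f Hsurj Hfin)).
-
  set (g := compLR h f).
  destruct (T_parity dec W e HWnd HeW p h (fun x => p (h x)) ts HpW Hpi Hts' Hev Hhf
     (or_intror (fun x => eq_refl))) as [L1 [ce1 [L2 [ce2 [D1 [D2 Hpar]]]]]].
  assert (Hag : forall a, ~ In (f a) W \/ ~ In (g a) W -> g a = f a).
  { intros a Ha. unfold g, compLR. f_equal. apply hfix. intros HaD.
    destruct Ha as [Ha|Ha]; apply Ha; [apply HfD; auto|apply HfD, hD; auto]. }
  assert (Hg : injective_map g) by (intros x y E; apply hinj, Hf; auto).
  assert (Hescg : forall k, ~ In (Nat.iter k g (g e)) W).
  { intros k. replace (g e) with (f e) by (unfold g, compLR; rewrite hee; auto).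
    rewrite (iter_agree f g W (f e));
    [apply Hescf | intros z Hz Hfz; apply Hag; auto | apply Hescf]. }
  assert (Hsurj : surj f <-> surj g).
  { unfold surj, g, compLR. split.
    - intros Hs y. destruct (Hs y) as [z <-]. destruct (hsurj z) as [x <-]. exists x; auto.
    - intros Hs y. destruct (Hs y) as [x Hx]. exists (h x). auto. }
  assert (HqW : forall x, In x W -> In (p (h x)) W) by (intros x Hx; apply HpW, hW; auto).
  assert (Hqg : forall x, In x W -> x <> e -> p (h x) = g x).
  { intros x Hx Ne. unfold g, compLR. rewrite Hpf; auto.
    intros E. apply Ne. apply hinj. rewrite E, hee. auto. }
  exact (proj2 (assembly f g p (fun x => p (h x)) W e L1 L2 ce1 ce2 Hf Hg HeW HpW Hpf Hescf
    HqW Hqg Hescg Hag D1 D2 Hpar Hinf_f Hsurj Hfin)).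
Qed.
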